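(* Let $M\ge2$ and let $L^{(1)},\dots,L^{(M)}$ be the $N^{(1)}\times N^{(1)}$ matrices of a hierarchical system as described in the context. Let $s_1,\dots,s_M$ be nonzero complex numbers and $L_s=\sum_{l=1}^M s_lL^{(l)}$. Then \[ \lambda(L_s)=\{0\}\cup\big(\lambda(s_1L^{(1)})\setminus\{0\}\big)\cup\cdots\cup\big(\lambda(s_ML^{(M)})\setminus\{0\}\big). \]
   Context: Hierarchical structure. Fix an integer $M\ge 2$ and positive integers $N^{(1)},\dots,N^{(M)}$; set $N^{(M+1)}:=1$. For each $l\in\{1,\dots,M\}$ the $N^{(l)}$ nodes of layer $l$ are partitioned into $N^{(l+1)}$ groups $G^{(l)}_1,\dots,G^{(l)}_{N^{(l+1)}}$ of sizes $k^{(l)}_p\ge1$ (so $\sum_pk^{(l)}_p=N^{(l)}$), numbered consecutively: group $G^{(l)}_p$ consists of nodes $\sum_{m<p}k^{(l)}_m+1,\dots,\sum_{m\le p}k^{(l)}_m$ of layer $l$. Each group $G^{(l)}_p$ carries a connected undirected graph with binary adjacency matrix; $L^{(l)}_p$ is its Laplacian (degree matrix minus adjacency matrix), and $L^{(l)}_D=\mathrm{diag}(L^{(l)}_1,\dots,L^{(l)}_{N^{(l+1)}})$ (block diagonal). Weights: positive constants $a_1,\dots,a_{N^{(1)}}$; $a^{(1)}_i=a_i$, $a^{(l+1)}_p=\sum_{i\in G^{(l)}_p}a^{(l)}_i$; $K^{(l)}=\mathrm{diag}(a^{(l)}_1,\dots,a^{(l)}_{N^{(l)}})^{-1}$. For $l=1,\dots,M-1$: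 $B^{(l)}=\mathrm{diag}(\mathbf{1}_{k^{(l)}_1},\dots,\mathbf{1}_{k^{(l)}_{N^{(l+1)}}})\in\mathbb{R}^{N^{(l)}\times N^{(l+1)}}$ ($\mathbf 1_k$ all-ones column vector), $C^{(l)}=\mathrm{diag}(C^{(l)}_1,\dots,C^{(l)}_{N^{(l+1)}})\in\mathbb{R}^{N^{(l+1)}\times N^{(l)}}$ with each $C^{(l)}_p\in\mathbb{R}^{1\times k^{(l)}_p}$ having nonnegative entries summing to $1$. $L^{(1)}=K^{(1)}L^{(1)}_D$ and $L^{(l)}=B^{(1)}\cdots B^{(l-1)}K^{(l)}L^{(l)}_DC^{(l-1)}\cdots C^{(1)}$ for $l=2,\dots,M$. $\lambda(A)$ is the set of eigenvalues of $A$. *)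

(* Defs.v *)
From HB Require Import structures.
From mathcomp Require Import all_boot all_order all_algebra.
Set Implicit Arguments. Unset Strict Implicit. Unset Printing Implicit Defensive.
Import Order.TTheory GRing.Theory Num.Theory.
Local Open Scope ring_scope.

(* Layers are numbered 1..M as in the paper; nodes and
   groups inside a layer are numbered from 0 (0-based version of the paper's
   consecutive numbering).
   - N l        : number of nodes of layer l (N (M+1) = 1)
   - k l p      : size of group p of layer l (p < N (l+1))
   - adj l      : adjacency relation of the (disjoint union of the) group
                  graphs of layer l, on nodes 'I_(N l)
   - c l i      : entry of C^(l) for node i of layer l
   - a i        : positive weights of the layer-1 nodes *)

Section Hier.
Variable R : numClosedFieldType.
Variable N : nat -> nat.
Variable k : nat -> nat -> nat.

Definition inG (l p i : nat) : bool :=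
  ((\sum_(m < p) k l m <= i) && (i < \sum_(m < p.+1) k l m))%N.

Definition laplacian (n : nat) (e : rel 'I_n) : 'M[R]_n :=
  \matrix_(i, j) ((i == j)%:R * (\sum_(m < n) (e i m)%:R) - (e i j)%:R).

(* aggregated weights: aw0 l = a^(l+1) *)
Fixpoint aw0 (a : nat -> R) (l : nat) (i : nat) : R :=
  match l with
  | 0 => a i
  | l'.+1 => \sum_(j < N l'.+1 | inG l'.+1 i j) aw0 a l' j
  end.
Definition aw (a : nat -> R) (l i : nat) : R := aw0 a l.-1 i.

Definition Kmat (a : nat -> R) (l : nat) : 'M[R]_(N l) :=
  invmx (diag_mx (\row_(i < N l) aw a l i)).

(* B^(l) : N^(l) x N^(l+1), block diag of all-ones columns *)
Definition Bmat (l : nat) : 'M[R]_(N l, N l.+1) :=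
  \matrix_(i, p) (inG l p i)%:R.

(* C^(l) : N^(l+1) x N^(l), block diag of the rows C^(l)_p *)
Definition Cmat (c : nat -> nat -> R) (l : nat) : 'M[R]_(N l.+1, N l) :=
  \matrix_(p, i) (if inG l p i then c l i else 0).

Fixpoint Bchain (l : nat) : 'M[R]_(N 1, N l.+1) :=
  match l with
  | 0 => 1%:M
  | l'.+1 => Bchain l' *m Bmat l'.+1
  end.

Fixpoint Cchain (c : nat -> nat -> R) (l : nat) : 'M[R]_(N l.+1, N 1) :=
  match l with
  | 0 => 1%:M
  | l'.+1 => Cmat c l'.+1 *m Cchain c l'
  end.

Definition LD (adj : forall l, rel 'I_(N l)) (l : nat) : 'M[R]_(N l) :=
  laplacian (adj l).

(* L^(1) = K^(1) L_D^(1);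
   L^(l) = B^(1)..B^(l-1) K^(l) L_D^(l) C^(l-1)..C^(1)  for l >= 2 *)
Definition Lmat (adj : forall l, rel 'I_(N l)) (c : nat -> nat -> R)
  (a : nat -> R) (l : nat) : 'M[R]_(N 1) :=
  match l with
  | 0 => 0
  | 1 => Kmat a 1 *m LD adj 1
  | l'.+2 => Bchain l'.+1 *m Kmat a l'.+2 *m LD adj l'.+2 *m Cchain c l'.+1
  end.

End Hier.

(* Main.v *)
Require Import Defs.
From HB Require Import structures.
From mathcomp Require Import all_boot all_order all_algebra zify.
Import Order.TTheory GRing.Theory Num.Theory.
Local Open Scope ring_scope.




Lemma eig_tr {F : fieldType} n (A : 'M[F]_n) a : eigenvalue A^T a = eigenvalue A a.
Proof.
rewrite !eigenvalue_root_char /char_poly -det_tr; congr (root (\det _) a).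
by apply/matrixP => i j; rewrite !mxE eq_sym.
Qed.

Lemma eig_col {F : fieldType} n (A : 'M[F]_n) a :
  eigenvalue A a <-> exists2 v : 'cV_n, A *m v = a *: v & v != 0.
Proof.
rewrite -eig_tr; split.
  move/eigenvalueP => [v Hv nz]; exists v^T.
    by rewrite -[A]trmxK -trmx_mul Hv linearZ.
  by apply: contra nz => /eqP E; rewrite -[v]trmxK E trmx0.
move=> [v Hv nz]; apply/eigenvalueP; exists v^T.
  by rewrite -trmx_mul Hv linearZ.
by apply: contra nz => /eqP E; rewrite -[v]trmxK E trmx0.
Qed.

Lemma eig_two {F : fieldType} n (A B : 'M[F]_n) z : A *m B = 0 -> z != 0 ->
  eigenvalue (A + B) z <-> eigenvalue A z \/ eigenvalue B z.
Proof.
move=> AB z0; split.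
  move/eig_col => [v Hv nz].
  have [Av0|Avn] := eqVneq (A *m v) 0.
    right; apply/eig_col; exists v => //.
    by rewrite -Hv mulmxDl Av0 add0r.
  left; apply/eig_col; exists (A *m v) => //.
  have := congr1 (mulmx A) Hv.
  by rewrite mulmxA mulmxDr AB addr0 -mulmxA -scalemxAr.
case.
  move/eigenvalueP => [w Hw nz]; apply/eigenvalueP; exists w => //.
  have wB : w *m B = 0.
    have := congr1 (mulmx^~ B) Hw; rewrite -mulmxA AB mulmx0 -scalemxAl.
    move/esym/eqP; rewrite scaler_eq0 (negbTE z0) /=; exact: eqP.
  by rewrite mulmxDr wB addr0.
move/eig_col => [v Hv nz]; apply/eig_col; exists v => //.
have Av : A *m v = 0.
  have := congr1 (mulmx A) Hv; rewrite mulmxA AB mul0mx -scalemxAr.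
  move/esym/eqP; rewrite scaler_eq0 (negbTE z0) /=; exact: eqP.
by rewrite mulmxDl Av add0r.
Qed.

Lemma eig0 {F : fieldType} {n : nat} (z : F) : z != 0 -> ~ eigenvalue (0 : 'M[F]_n) z.
Proof.
move=> z0 /eig_col [v]; rewrite mul0mx => /esym/eqP.
by rewrite scaler_eq0 (negbTE z0) /= => ->.
Qed.

Lemma eig_sum {F : fieldType} n (G : nat -> 'M[F]_n) z m : z != 0 -> forall a,
  (forall i j, (a <= i)%N -> (i < j)%N -> (j < a + m)%N -> G i *m G j = 0) ->
  eigenvalue (\sum_(a <= l < a + m) G l) z <->
  exists2 l, (a <= l < a + m)%N & eigenvalue (G l) z.
Proof.
move=> z0; elim: m => [|m IH] a HG.
  rewrite addn0 big_geq //; split => [/(@eig0 _ n z z0)[]|[l]].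
  by move=> /andP[H1 H2]; lia.
rewrite -addSnnS big_ltn; last by lia.
rewrite eig_two //; last first.
  rewrite mulmx_sumr big_nat big1 // => j /andP [Hj1 Hj2].
  apply: HG; lia.
have IH' := IH a.+1 (fun i j Hi Hij Hj => HG i j (ltnW Hi) Hij ltac:(lia)).
split.
  case=> [H|/IH' [l /andP [H1 H2] H3]].
    by exists a => //; rewrite leqnn /=; lia.
  by exists l => //; apply/andP; split; lia.
move=> [l /andP [H1 H2] H3].
have [E|la] := eqVneq l a; first by left; rewrite -E.
right; apply/IH'; exists l => //; apply/andP; split; last lia.
by rewrite ltn_neqAle eq_sym la H1.
Qed.


Lemma sum_pref_mono (k : nat -> nat -> nat) l {p q} : (p <= q)%N ->
  (\sum_(m < p) k l m <= \sum_(m < q) k l m)%N.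
Proof.
move=> /subnKC <-; elim: (q - p)%N => [|d IH]; first by rewrite addn0.
by rewrite addnS big_ord_recr /=; apply: leq_trans IH (leq_addr _ _).
Qed.

Lemma inG_uniq {k l p q i} : inG k l p i -> inG k l q i -> p = q.
Proof.
wlog: p q / (p <= q)%N => [W Hp Hq|].
  by case/orP: (leq_total p q) => H; [apply: W | apply/esym; apply: W].
rewrite leq_eqVlt => /orP [/eqP //|Hpq] /andP [_ H1] /andP [H2 _].
have := sum_pref_mono k l Hpq; lia.
Qed.

Lemma sum_delta (R : numClosedFieldType) n (i : 'I_n) (g : 'I_n -> R) :
  \sum_(j < n) (i == j)%:R * g j = g i.
Proof.
rewrite (bigD1 i) //= eqxx mul1r big1 ?addr0 // => j /negbTE.
by rewrite eq_sym => ->; rewrite mul0r.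
Qed.

Lemma LD1 (R : numClosedFieldType) (N : nat -> nat) (adj : forall l, rel 'I_(N l)) l :
  LD R adj l *m (const_mx 1 : 'cV_(N l)) = 0.
Proof.
apply/matrixP => i j; rewrite !mxE.
under eq_bigr do rewrite !mxE mulr1.
by rewrite sumrB sum_delta subrr.
Qed.

Lemma LD_B (R : numClosedFieldType) (N : nat -> nat) k (adj : forall l, rel 'I_(N l)) l :
  (forall i j : 'I_(N l), adj l i j ->
     exists2 p, (p < N l.+1)%N & inG k l p i && inG k l p j) ->
  LD R adj l *m Bmat R N k l = 0.
Proof.
move=> Hadj; apply/matrixP => i q; rewrite !mxE.
under eq_bigr do rewrite !mxE mulrBl.
rewrite sumrB (eq_bigr (fun j => (i == j)%:R * ((\sum_(m < N l) (adj l i m)%:R) * (inG k l q j)%:R))); last by move=> j _; rewrite mulrA.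
rewrite sum_delta mulr_suml; apply/eqP; rewrite subr_eq0; apply/eqP.
apply: eq_bigr => j _.
case E: (adj l i j); last by rewrite !mul0r.
have [p _ /andP [Hi Hj]] := Hadj _ _ E.
have -> : inG k l q j = inG k l q i.
  apply/idP/idP => H.
    by rewrite (inG_uniq H Hj).
  by rewrite (inG_uniq H Hi).
by [].
Qed.

Lemma CB (R : numClosedFieldType) (N : nat -> nat) k (c : nat -> nat -> R) l :
  (forall p, (p < N l.+1)%N -> \sum_(i < N l | inG k l p i) c l i = 1) ->
  Cmat N k c l *m Bmat R N k l = 1%:M.
Proof.
move=> Hc; apply/matrixP => p q; rewrite !mxE.
under eq_bigr do rewrite !mxE.
have [<-|pq] := eqVneq p q.
  transitivity (\sum_(i < N l | inG k l p i) c l i); last by rewrite Hc // eqxx.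
  rewrite [RHS]big_mkcond /=; apply: eq_bigr => i _.
  by case: (inG k l p i); rewrite ?mulr1 ?mul0r.
rewrite big1 // => i _.
case Hp: (inG k l p i); last by rewrite mul0r.
case Hq: (inG k l q i); last by rewrite mulr0.
by move: pq; rewrite -val_eqE /= (inG_uniq Hp Hq) eqxx.
Qed.

Lemma C1 (R : numClosedFieldType) (N : nat -> nat) k (c : nat -> nat -> R) l :
  (forall p, (p < N l.+1)%N -> \sum_(i < N l | inG k l p i) c l i = 1) ->
  Cmat N k c l *m (const_mx 1 : 'cV_(N l)) = const_mx 1.
Proof.
move=> Hc; apply/matrixP => p q; rewrite !mxE.
under eq_bigr do rewrite !mxE mulr1.
by rewrite -big_mkcond Hc.
Qed.

Lemma CB_chain (R : numClosedFieldType) (N : nat -> nat) k (c : nat -> nat -> R) i :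
  (forall l, (1 <= l <= i)%N -> Cmat N k c l *m Bmat R N k l = 1%:M) ->
  Cchain N k c i *m Bchain R N k i = 1%:M.
Proof.
elim: i => [|i IH] H /=; first by rewrite mulmx1.
rewrite mulmxA -(mulmxA _ (Cchain N k c i)) IH; last by move=> l /andP[H1 H2]; apply: H; lia.
by rewrite mulmx1; apply: H; lia.
Qed.

Lemma C1_chain (R : numClosedFieldType) (N : nat -> nat) k (c : nat -> nat -> R) i :
  (forall l, (1 <= l <= i)%N -> Cmat N k c l *m (const_mx 1 : 'cV_(N l)) = const_mx 1) ->
  Cchain N k c i *m (const_mx 1 : 'cV_(N 1)) = const_mx 1.
Proof.
elim: i => [|n IH] H /=; first by rewrite mul1mx.
rewrite -mulmxA IH; last by move=> l /andP[H1 H2]; apply: H; lia.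
by rewrite H //; lia.
Qed.

Lemma Bsplit (R : numClosedFieldType) (N : nat -> nat) k i j : (i <= j)%N ->
  exists Y : 'M[R]_(N i.+1, N j.+1), Bchain R N k j = Bchain R N k i *m Y.
Proof.
elim: j => [|j IH].
  by rewrite leqn0 => /eqP ->; exists 1%:M; rewrite mulmx1.
rewrite leq_eqVlt => /orP [/eqP ->|]; first by exists 1%:M; rewrite mulmx1.
rewrite ltnS => /IH [Y HY]; exists (Y *m Bmat R N k j.+1).
by rewrite /= HY mulmxA.
Qed.

Lemma Lmat_eq (R : numClosedFieldType) (N : nat -> nat) k (adj : forall l, rel 'I_(N l))
  (c : nat -> nat -> R) a l :
  Lmat k adj c a l.+1 = Bchain R N k l *m Kmat N k a l.+1 *m LD R adj l.+1 *m Cchain N k c l.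
Proof. by case: l => [|l] //=; rewrite mul1mx mulmx1. Qed.

Theorem corollary1 (R : numClosedFieldType) (M : nat) (N : nat -> nat)
  (k : nat -> nat -> nat) (adj : forall l, rel 'I_(N l))
  (c : nat -> nat -> R) (a : nat -> R) (s : nat -> R) :
  (2 <= M)%N ->
  (forall l, (1 <= l <= M)%N -> (0 < N l)%N) ->
  N M.+1 = 1%N ->
  (* group sizes: positive, and they partition the layer *)
  (forall l p, (1 <= l <= M)%N -> (p < N l.+1)%N -> (0 < k l p)%N) ->
  (forall l, (1 <= l <= M)%N -> \sum_(p < N l.+1) k l p = N l) ->
  (* each group carries an undirected graph (binary symmetric adjacency),
     edges only inside groups, and each group graph is connected *)
  (forall l, (1 <= l <= M)%N -> forall i j : 'I_(N l), adj l i j = adj l j i) ->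
  (forall l, (1 <= l <= M)%N -> forall i j : 'I_(N l), adj l i j ->
     exists2 p, (p < N l.+1)%N & inG k l p i && inG k l p j) ->
  (forall l, (1 <= l <= M)%N -> forall p (i j : 'I_(N l)), (p < N l.+1)%N ->
     inG k l p i -> inG k l p j -> connect (adj l) i j) ->
  (* positive weights *)
  (forall i, (i < N 1)%N -> 0 < a i) ->
  (* C^(l)_p : nonnegative entries summing to 1 *)
  (forall l, (1 <= l <= M.-1)%N -> forall i, (i < N l)%N -> 0 <= c l i) ->
  (forall l, (1 <= l <= M.-1)%N -> forall p, (p < N l.+1)%N ->
     \sum_(i < N l | inG k l p i) c l i = 1) ->
  (* nonzero complex coefficients *)
  (forall l, (1 <= l <= M)%N -> s l != 0) ->
  let L := Lmat k adj c a in
  let Ls := \sum_(1 <= l < M.+1) s l *: L l in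
  forall z : R,
    eigenvalue Ls z <->
    (z = 0 \/ exists2 l, (1 <= l <= M)%N & eigenvalue (s l *: L l) z && (z != 0)).
Proof.
move=> HM HN HN1 Hk Hsum Hsym Hadj Hconn Ha Hc0 Hc1 Hs L Ls z.
have HLL : forall i j, (1 <= i)%N -> (i < j)%N -> (j <= M)%N -> L i *m L j = 0.
  move=> [|i] [|j] // _ Hij HjM; rewrite /L !Lmat_eq.
  have [Y ->] := Bsplit R N k i.+1 j Hij.
  rewrite /= !mulmxA -(mulmxA _ (Cchain N k c i) (Bchain R N k i)).
  rewrite CB_chain; last by move=> l Hl; apply: CB; apply: Hc1; lia.
  rewrite mulmx1 -(mulmxA _ (LD R adj i.+1) (Bmat R N k i.+1)).
  by rewrite LD_B ?mulmx0 ?mul0mx //; apply: Hadj; lia.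
have HL1 : forall l, (1 <= l <= M)%N -> L l *m (const_mx 1 : 'cV_(N 1)) = 0.
  move=> [|l] // Hl; rewrite /L Lmat_eq -!mulmxA.
  rewrite C1_chain; last by move=> l' Hl'; apply: C1; apply: Hc1; lia.
  by rewrite LD1 !mulmx0.
have [->|z0] := eqVneq z 0.
  split=> [_|_]; first by left.
  apply/eig_col; exists (const_mx 1).
    rewrite scale0r /Ls mulmx_suml big_nat big1 // => l Hl.
    by rewrite -scalemxAl HL1 ?scaler0.
  have HN1' : (0 < N 1)%N by apply: HN; lia.
  apply/eqP => /matrixP /(_ (Ordinal HN1') 0); rewrite !mxE => /eqP.
  by rewrite oner_eq0.
have HG : forall i j, (1 <= i)%N -> (i < j)%N -> (j < 1 + M)%N ->
    (s i *: L i) *m (s j *: L j) = 0.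
  move=> i j Hi Hij Hj; rewrite -scalemxAl -scalemxAr HLL ?scaler0 //; lia.
have E := @eig_sum _ _ (fun l => s l *: L l) z M z0 1 HG.
rewrite /Ls.
split.
  move/E => [l Hl H]; right; exists l; first lia.
  by apply/andP; split.
case=> [/eqP|[l Hl /andP [H _]]]; first by rewrite (negbTE z0).
apply/E; exists l => //; lia.
Qed.
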